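(* For every $\alpha\in(0,1)$ and $\theta\in\mathbb R$, the elementary expectile scoring function $\mathrm S^{\rm E}_{\alpha,\theta}$ belongs to $\mathcal S^{\rm E}_{\alpha,1}$ and is an extreme point of $\mathcal S^{\rm E}_{\alpha,1}$: if $\mathrm S^{\rm E}_{\alpha,\theta}=(\mathrm S_1+\mathrm S_2)/2$ pointwise on $\mathbb R^2$ with $\mathrm S_1,\mathrm S_2\in\mathcal S^{\rm E}_{\alpha,1}$, then $\mathrm S_1=\mathrm S_2=\mathrm S^{\rm E}_{\alpha,\theta}$.
   Context: $\mathbb 1(A)$ denotes the indicator of $A$ and $(t)_+=\max(t,0)$. $\mathcal I$ is the class of left-continuous non-decreasing functions $\mathbb R\to\mathbb R$, and $\mathcal I_1=\{g\in\mathcal I:\lim_{x\to-\infty}g(x)=0,\ \lim_{x\to+\infty}g(x)=1\}$. For a convex $\phi:\mathbb R\to\mathbb R$, $\phi'$ denotes its left-hand derivative. $\mathcal C_1$ is the class of convex $\phi:\mathbb R\to\mathbb R$ with $\phi(0)=0$ and $\phi'\in\mathcal I_1$. For $\alpha\in(0,1)$, $\mathcal S^{\rm E}_{\alpha,1}$ is the (convex) class of all functions of the form $\mathrm S(x,y)=|\mathbb 1(y<x)-\alpha|\,(\phi(y)-\phi(x)-\phi'(x)(y-x))$ with $\phi\in\mathcal C_1$. The elementary expectile scoring function is $\mathrm S^{\rm E}_{\alpha,\theta}(x,y)=|\mathbb 1(y<x)-\alpha|\big((y-\theta)_+-(x-\theta)_+-(y-x)\mathbb 1(\theta<x)\big)$,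 i.e. it equals $(1-\alpha)|y-\theta|$ if $y\le\theta<x$, $\alpha|y-\theta|$ if $x\le\theta<y$, and $0$ otherwise. *)

(* Defs.v *)
From Stdlib Require Import Reals Lra.
Open Scope R_scope.

Definition ind_lt (y x : R) : R := if Rlt_dec y x then 1 else 0.

Definition pos_part (t : R) : R := Rmax t 0.

Definition convex (phi : R -> R) : Prop :=
  forall x y t, 0 <= t <= 1 ->
    phi (t * x + (1 - t) * y) <= t * phi x + (1 - t) * phi y.

Definition is_left_deriv (phi : R -> R) (x d : R) : Prop :=
  forall eps, 0 < eps -> exists delta, 0 < delta /\
    forall y, x - delta < y < x -> Rabs ((phi y - phi x) / (y - x) - d) < eps.

Definition nondecreasing (g : R -> R) : Prop := forall x y, x <= y -> g x <= g y.
Definition left_continuous (g : R -> R) : Prop :=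
  forall x eps, 0 < eps -> exists delta, 0 < delta /\
    forall y, x - delta < y < x -> Rabs (g y - g x) < eps.
Definition in_I (g : R -> R) : Prop := nondecreasing g /\ left_continuous g.

Definition lim_minus_infty (g : R -> R) (l : R) : Prop :=
  forall eps, 0 < eps -> exists M, forall x, x < M -> Rabs (g x - l) < eps.
Definition lim_plus_infty (g : R -> R) (l : R) : Prop :=
  forall eps, 0 < eps -> exists M, forall x, M < x -> Rabs (g x - l) < eps.
Definition in_I1 (g : R -> R) : Prop :=
  in_I g /\ lim_minus_infty g 0 /\ lim_plus_infty g 1.

Definition in_C1 (phi dphi : R -> R) : Prop :=
  convex phi /\ phi 0 = 0 /\ (forall x, is_left_deriv phi x (dphi x)) /\ in_I1 dphi.

Definition S_phi (alpha : R) (phi dphi : R -> R) (x y : R) : R :=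
  Rabs (ind_lt y x - alpha) * (phi y - phi x - dphi x * (y - x)).

Definition in_SE (alpha : R) (S : R -> R -> R) : Prop :=
  exists phi dphi, in_C1 phi dphi /\ forall x y, S x y = S_phi alpha phi dphi x y.

Definition SE_elem (alpha theta : R) (x y : R) : R :=
  Rabs (ind_lt y x - alpha) *
  (pos_part (y - theta) - pos_part (x - theta) - (y - x) * ind_lt theta x).

(* Main.v *)
Require Import Defs.
From Stdlib Require Import Reals Lra Psatz.
Open Scope R_scope.

Lemma pos_neg t : t <= 0 -> pos_part t = 0.
Proof. intro; unfold pos_part; apply Rmax_right; lra. Qed.
Lemma pos_pos t : 0 <= t -> pos_part t = t.
Proof. intro; unfold pos_part; apply Rmax_left; lra. Qed.
Lemma ind_1 y x : y < x -> ind_lt y x = 1.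
Proof. intro; unfold ind_lt; destruct (Rlt_dec y x); lra. Qed.
Lemma ind_0 y x : x <= y -> ind_lt y x = 0.
Proof. intro; unfold ind_lt; destruct (Rlt_dec y x); lra. Qed.

Lemma conv3 phi a b c : convex phi -> a < b < c ->
  phi b * (c - a) <= (c - b) * phi a + (b - a) * phi c.
Proof.
  intros Hc [Hab Hbc].
  pose (t := (c - b) / (c - a)).
  assert (Ht : 0 <= t <= 1).
  { unfold t; split.
    - unfold Rdiv; apply Rmult_le_pos; [lra| left; apply Rinv_0_lt_compat; lra].
    - apply Rmult_le_reg_r with (c - a); [lra|].
      unfold Rdiv; rewrite Rmult_assoc, Rinv_l; lra. }
  specialize (Hc a c t Ht).
  replace (t * a + (1 - t) * c) with b in Hc by (unfold t; field; lra).
  apply Rmult_le_compat_r with (r := c - a) in Hc; [|lra].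
  replace ((t * phi a + (1 - t) * phi c) * (c - a)) with
    ((c - b) * phi a + (b - a) * phi c) in Hc by (unfold t; field; lra).
  exact Hc.
Qed.

Lemma breg_nonneg phi d x y : convex phi -> is_left_deriv phi x d ->
  0 <= phi y - phi x - d * (y - x).
Proof.
  intros Hc Hd.
  destruct (Rle_or_lt 0 (phi y - phi x - d * (y - x))) as [H|H]; [exact H|].
  exfalso.
  set (B := phi y - phi x - d * (y - x)) in H.
  assert (HB : B = phi y - phi x - d * (y - x)) by reflexivity. clearbody B.
  destruct (Rtotal_order y x) as [Hyx|[Hyx|Hyx]].
  - assert (He : 0 < - B / (2 * (x - y))).
    { unfold Rdiv; apply Rmult_lt_0_compat; [lra|apply Rinv_0_lt_compat; lra]. }
    assert (Heps : (- B / (2 * (x - y))) * (x - y) = - B / 2) by (field; lra).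
    set (eps := - B / (2 * (x - y))) in He, Heps. clearbody eps.
    destruct (Hd eps He) as [del [Hdel Hz]].
    assert (Hm : Rmax y (x - del) < x) by (apply Rmax_lub_lt; lra).
    pose proof (Rmax_l y (x-del)). pose proof (Rmax_r y (x-del)).
    set (m := Rmax y (x - del)) in *. clearbody m.
    assert (Hz1 : y < m / 2 + x / 2 < x) by lra.
    assert (Hz2 : x - del < m / 2 + x / 2) by lra.
    set (z := m / 2 + x / 2) in *. clearbody z.
    specialize (Hz z (conj Hz2 (proj2 Hz1))).
    assert (Hpz : phi z = phi x + ((phi z - phi x) / (z - x)) * (z - x)) by (field; lra).
    set (s := (phi z - phi x) / (z - x)) in Hz, Hpz. clearbody s.
    pose proof (conv3 phi y z x Hc Hz1) as C.
    rewrite Hpz in C.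
    assert (K : phi x - s * (x - y) <= phi y).
    { apply Rmult_le_reg_l with (x - z); [lra|]. nra. }
    apply Rabs_def2 in Hz.
    nra.
  - subst; lra.
  - assert (He : 0 < - B / (2 * (y - x))).
    { unfold Rdiv; apply Rmult_lt_0_compat; [lra|apply Rinv_0_lt_compat; lra]. }
    assert (Heps : (- B / (2 * (y - x))) * (y - x) = - B / 2) by (field; lra).
    set (eps := - B / (2 * (y - x))) in He, Heps. clearbody eps.
    destruct (Hd eps He) as [del [Hdel Hz]].
    assert (Hz1 : x - del / 2 < x < y) by lra.
    set (z := x - del / 2) in *.
    assert (Hz2 : x - del < z < x) by (unfold z; lra).
    clearbody z.
    specialize (Hz z Hz2).
    assert (Hpz : phi z = phi x + ((phi z - phi x) / (z - x)) * (z - x)) by (field; lra).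
    set (s := (phi z - phi x) / (z - x)) in Hz, Hpz. clearbody s.
    pose proof (conv3 phi z x y Hc Hz1) as C.
    rewrite Hpz in C.
    assert (K : phi x + s * (y - x) <= phi y).
    { apply Rmult_le_reg_l with (x - z); [lra|]. nra. }
    apply Rabs_def2 in Hz.
    nra.
Qed.
Lemma elem_in_SE alpha theta : in_SE alpha (SE_elem alpha theta).
Proof.
  exists (fun z => pos_part (z - theta) - pos_part (0 - theta)), (ind_lt theta).
  split.
  - repeat split.
    + intros x y t Ht.
      pose proof (Rmax_l (x - theta) 0). pose proof (Rmax_r (x - theta) 0).
      pose proof (Rmax_l (y - theta) 0). pose proof (Rmax_r (y - theta) 0).
      unfold pos_part.
      assert (Rmax (t * x + (1 - t) * y - theta) 0 <=
              t * Rmax (x - theta) 0 + (1 - t) * Rmax (y - theta) 0).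
      { assert (A1 : t * (x - theta) <= t * Rmax (x - theta) 0) by (apply Rmult_le_compat_l; lra).
        assert (A2 : t * 0 <= t * Rmax (x - theta) 0) by (apply Rmult_le_compat_l; lra).
        assert (A3 : (1 - t) * (y - theta) <= (1 - t) * Rmax (y - theta) 0) by (apply Rmult_le_compat_l; lra).
        assert (A4 : (1 - t) * 0 <= (1 - t) * Rmax (y - theta) 0) by (apply Rmult_le_compat_l; lra).
        apply Rmax_lub; lra. }
      lra.
    + simpl. lra.
    + intros x eps He.
      destruct (Rle_or_lt x theta) as [Hx|Hx].
      * exists 1; split; [lra|]. intros y Hy.
        rewrite (ind_0 theta x Hx), (pos_neg (y - theta)), (pos_neg (x - theta)) by lra.
        match goal with |- Rabs ?e < _ => replace e with 0 by (field; lra) end.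
        rewrite Rabs_R0; lra.
      * exists (x - theta); split; [lra|]. intros y Hy.
        rewrite (ind_1 theta x Hx), (pos_pos (y - theta)), (pos_pos (x - theta)) by lra.
        match goal with |- Rabs ?e < _ => replace e with 0 by (field; lra) end.
        rewrite Rabs_R0; lra.
    + intros x y Hxy. unfold ind_lt.
      destruct (Rlt_dec theta x), (Rlt_dec theta y); lra.
    + intros x eps He.
      destruct (Rle_or_lt x theta) as [Hx|Hx].
      * exists 1; split; [lra|]. intros y Hy.
        rewrite (ind_0 theta x Hx), (ind_0 theta y) by lra.
        rewrite Rminus_0_r, Rabs_R0; lra.
      * exists (x - theta); split; [lra|]. intros y Hy.
        rewrite (ind_1 theta x Hx), (ind_1 theta y) by lra.
        rewrite Rminus_diag, Rabs_R0; lra.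
    + intros eps He. exists theta. intros x Hx.
      rewrite (ind_0 theta x) by lra. rewrite Rminus_0_r, Rabs_R0; lra.
    + intros eps He. exists theta. intros x Hx.
      rewrite (ind_1 theta x) by lra. rewrite Rminus_diag, Rabs_R0; lra.
  - intros x y. unfold SE_elem, S_phi. f_equal. ring.
Qed.

Definition Bf (phi dphi : R -> R) (x y : R) := phi y - phi x - dphi x * (y - x).
Definition Bt (theta x y : R) :=
  pos_part (y - theta) - pos_part (x - theta) - (y - x) * ind_lt theta x.

Lemma key theta phi dphi psi dpsi :
  in_C1 phi dphi -> in_C1 psi dpsi ->
  (forall x y, Bt theta x y = (Bf phi dphi x y + Bf psi dpsi x y) / 2) ->
  forall x y, Bf phi dphi x y = Bt theta x y.
Proof.
  intros [Hc [_ [Hd [_ [Hm Hp]]]]] [Hc' [_ [Hd' _]]] HB.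
  assert (Z : forall x y, Bt theta x y = 0 -> Bf phi dphi x y = 0).
  { intros x y H0. pose proof (HB x y).
    pose proof (breg_nonneg phi (dphi x) x y Hc (Hd x)).
    pose proof (breg_nonneg psi (dpsi x) x y Hc' (Hd' x)).
    unfold Bf in *. lra. }
  assert (Z1 : forall x y, x <= theta -> y <= theta -> Bf phi dphi x y = 0).
  { intros x y Hx Hy; apply Z; unfold Bt.
    rewrite !pos_neg, ind_0 by lra. ring. }
  assert (Z2 : forall x y, theta < x -> theta < y -> Bf phi dphi x y = 0).
  { intros x y Hx Hy; apply Z; unfold Bt.
    rewrite !pos_pos, ind_1 by lra. ring. }
  assert (Z3 : forall y, theta < y -> Bf phi dphi y theta = 0).
  { intros y Hy; apply Z; unfold Bt.
    rewrite !pos_pos, ind_1 by lra. ring. }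
  assert (C : forall x y, Bf phi dphi x y = 0 -> Bf phi dphi y x = 0 -> dphi x = dphi y).
  { intros x y H1 H2. unfold Bf in *.
    destruct (Req_dec x y) as [->|Hne]; [reflexivity|].
    assert (Hz : (dphi y - dphi x) * (y - x) = 0) by lra.
    destruct (Rmult_integral _ _ Hz); lra. }
  assert (D1 : forall x, x <= theta -> dphi x = dphi theta).
  { intros x Hx. apply C; apply Z1; lra. }
  assert (D2 : forall x y, theta < x -> theta < y -> dphi x = dphi y).
  { intros x y Hx Hy. apply C; apply Z2; lra. }
  assert (Dt : dphi theta = 0).
  { destruct (Req_dec (dphi theta) 0) as [|Hne]; [assumption|exfalso].
    destruct (Hm (Rabs (dphi theta)) ltac:(apply Rabs_pos_lt; exact Hne)) as [M HM].
    specialize (HM (Rmin M theta - 1)).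
    pose proof (Rmin_l M theta). pose proof (Rmin_r M theta).
    rewrite D1, Rminus_0_r in HM by lra. specialize (HM ltac:(lra)). lra. }
  assert (Dy : forall y, theta < y -> dphi y = 1).
  { intros y Hy.
    destruct (Req_dec (dphi y - 1) 0) as [|Hne]; [lra|exfalso].
    destruct (Hp (Rabs (dphi y - 1)) ltac:(apply Rabs_pos_lt; exact Hne)) as [M HM].
    specialize (HM (Rmax M theta + 1)).
    pose proof (Rmax_l M theta). pose proof (Rmax_r M theta).
    rewrite (D2 _ y) in HM by lra. specialize (HM ltac:(lra)). lra. }
  assert (Phi : forall z, phi z = phi theta + pos_part (z - theta)).
  { intro z. destruct (Rle_or_lt z theta) as [Hz|Hz].
    - rewrite pos_neg by lra. pose proof (Z1 theta z ltac:(lra) Hz).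
      unfold Bf in *. rewrite Dt in *. lra.
    - rewrite pos_pos by lra. pose proof (Z3 z Hz).
      unfold Bf in *. rewrite Dy in * by lra. lra. }
  assert (DP : forall z, dphi z = ind_lt theta z).
  { intro z. destruct (Rle_or_lt z theta) as [Hz|Hz].
    - rewrite ind_0, D1 by lra. exact Dt.
    - rewrite ind_1 by lra. apply Dy; lra. }
  intros x y. unfold Bf, Bt. rewrite (Phi x), (Phi y), DP. ring.
Qed.

Lemma absfac alpha y x : 0 < alpha < 1 -> 0 < Rabs (ind_lt y x - alpha).
Proof.
  intro. apply Rabs_pos_lt. unfold ind_lt; destruct (Rlt_dec y x); lra.
Qed.

Theorem mainTheorem4 (alpha theta : R) (Halpha : 0 < alpha < 1) :
  in_SE alpha (SE_elem alpha theta) /\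
  (forall S1 S2 : R -> R -> R,
     in_SE alpha S1 -> in_SE alpha S2 ->
     (forall x y, SE_elem alpha theta x y = (S1 x y + S2 x y) / 2) ->
     (forall x y, S1 x y = SE_elem alpha theta x y) /\
     (forall x y, S2 x y = SE_elem alpha theta x y)).
Proof.
  split; [apply elem_in_SE|].
  intros S1 S2 [p1 [d1 [H1 E1]]] [p2 [d2 [H2 E2]]] HS.
  assert (HB : forall x y, Bt theta x y = (Bf p1 d1 x y + Bf p2 d2 x y) / 2).
  { intros x y. specialize (HS x y). rewrite E1, E2 in HS.
    unfold SE_elem, S_phi in HS. unfold Bt, Bf.
    pose proof (absfac alpha y x Halpha).
    set (a := Rabs (ind_lt y x - alpha)) in *.
    apply Rmult_eq_reg_l with a; [|lra].
    rewrite HS. field. }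
  assert (HB' : forall x y, Bt theta x y = (Bf p2 d2 x y + Bf p1 d1 x y) / 2).
  { intros x y; rewrite HB; lra. }
  pose proof (key theta p1 d1 p2 d2 H1 H2 HB) as K1.
  pose proof (key theta p2 d2 p1 d1 H2 H1 HB') as K2.
  split; intros x y.
  - rewrite E1. unfold S_phi, SE_elem. fold (Bf p1 d1 x y). rewrite K1. unfold Bt. reflexivity.
  - rewrite E2. unfold S_phi, SE_elem. fold (Bf p2 d2 x y). rewrite K2. unfold Bt. reflexivity.
Qed.
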